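(* The class of halfspaces over $\mathbb{R}^2$ has a lossless compression scheme of size $5$ with respect to the comparison oracle (together with label queries), with the trivial inference rule.
   Context: A halfspace over $\mathbb{R}^2$ is $x\mapsto\mathrm{sign}(h(x))$ with $h(x)=\langle v,x\rangle+b$, $v\in S^1$, $b\in\mathbb{R}$ (label $1$ iff $h(x)\ge0$). A label query on $x$ returns its label; a comparison query on $x,x'$ returns whether $\langle x,v\rangle\ge\langle x',v\rangle$ (equivalently $h(x)\ge h(x')$). For $S\subseteq\mathbb{R}^2$, $Q_h(S)$ is the set of all combinations of valid responses to label and comparison queries on $S$, and $q(S)|_W$ its restriction to $W\subseteq S$. The label of $x$ is inferred by $q(S)$ if all halfspaces consistent with $q(S)$ give $x$ the same label; $I(q(S))$ is the set of such points. A lossless compression scheme of size $k$: for every halfspace $h$, every $S$ on which $h$'s label is constant, and every $q(S)\in Q_h(S)$, there is $W\subseteq S$ with $|W|\le k$ and $I(q(S))=I(q(S)|_W)$. *)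

(* Defs.v *)
From HB Require Import structures.
From mathcomp Require Import all_boot all_order all_algebra.
From mathcomp Require Import reals.
Set Implicit Arguments. Unset Strict Implicit. Unset Printing Implicit Defensive.
Import Order.TTheory GRing.Theory Num.Theory.
Local Open Scope ring_scope.

Section Halfspaces.
Variable R : realType.

Definition point := (R * R)%type.

Definition dot (u x : point) : R := u.1 * x.1 + u.2 * x.2.

Definition on_circle (v : point) : Prop := v.1 ^+ 2 + v.2 ^+ 2 = 1.

Definition hval (v : point) (b : R) (x : point) : R := dot v x + b.

Definition hlabel (v : point) (b : R) (x : point) : bool := 0 <= hval v b x.

Definition hcmp (v : point) (x x' : point) : bool := dot x' v <= dot x v.

Record responses := Responses {
  rlab : point -> bool;
  rcmp : point -> point -> bool }.

Definition valid_responses (v : point) (b : R) (S : seq point) (q : responses) : Prop :=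
  (forall x, x \in S -> rlab q x = hlabel v b x) /\
  (forall x x', x \in S -> x' \in S -> rcmp q x x' = hcmp v x x').

Definition consistent (q : responses) (W : seq point) (v' : point) (b' : R) : Prop :=
  on_circle v' /\
  (forall x, x \in W -> hlabel v' b' x = rlab q x) /\
  (forall x x', x \in W -> x' \in W -> hcmp v' x x' = rcmp q x x').

Definition inferred (q : responses) (W : seq point) (y : point) : Prop :=
  forall v1 b1 v2 b2, consistent q W v1 b1 -> consistent q W v2 b2 ->
    hlabel v1 b1 y = hlabel v2 b2 y.

Definition lossless_compression_scheme (k : nat) : Prop :=
  forall (v : point) (b : R), on_circle v ->
  forall S : seq point,
    (forall x y, x \in S -> y \in S -> hlabel v b x = hlabel v b y) ->
  forall q : responses, valid_responses v b S q ->
  exists W : seq point,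
    {subset W <= S} /\ (size W <= k)%N /\
    (forall y, inferred q S y <-> inferred q W y).

End Halfspaces.

(* Main.v *)
Require Import Defs.
From mathcomp Require Import all_boot all_order all_algebra reals ring lra.
Set Implicit Arguments. Unset Strict Implicit. Unset Printing Implicit Defensive.
Import Order.TTheory GRing.Theory Num.Theory.
Local Open Scope ring_scope.

Definition ordc (R : realType) (v v' : point R) (T : seq (point R)) :=
  forall x x', x \in T -> x' \in T -> hcmp v' x x' = hcmp v x x'.

Lemma argmin (T : eqType) (R : realType) (s : seq T) (g : T -> R) :
  s != [::] -> exists2 x, x \in s & forall y, y \in s -> g x <= g y.
Proof.
elim: s => [//|a s IH] _.
case: (eqVneq s [::]) => [->|ne].
  by exists a; rewrite ?mem_head // => y; rewrite inE => /eqP ->.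
have [x xs hx] := IH ne.
case: (leP (g a) (g x)) => h.
  exists a; first exact: mem_head.
  move=> y; rewrite inE => /orP [/eqP ->//|ys]; exact: le_trans h (hx _ ys).
exists x; first by rewrite inE xs orbT.
move=> y; rewrite inE => /orP [/eqP ->|ys]; [exact: ltW|exact: hx].
Qed.

Lemma ord_eq (R : realType) (v v' : point R) W a b :
  ordc v v' W -> a \in W -> b \in W -> dot a v = dot b v -> dot a v' = dot b v'.
Proof.
move=> o aW bW e; apply/le_anti/andP; split.
- have := o b a bW aW; rewrite /hcmp e lexx => ->. done.
- have := o a b aW bW; rewrite /hcmp e lexx => ->. done.
Qed.

Lemma ord_lt (R : realType) (v v' : point R) W c e :
  ordc v v' W -> c \in W -> e \in W -> dot c v < dot e v -> dot c v' < dot e v'.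
Proof.
move=> o cW eW lt; have := o c e cW eW; rewrite /hcmp [in RHS]leNgt lt /=.
by move/negbT; rewrite -ltNge.
Qed.

Definition cross (R : realType) (u w : point R) := u.1 * w.2 - u.2 * w.1.

Lemma ident (R : realType) (v v' d : point R) : on_circle v ->
  dot d v' = dot v' v * dot d v + cross v v' * cross v d.
Proof.
rewrite /on_circle /dot /cross => h.
rewrite -[LHS]mul1r -h; ring.
Qed.
From Stdlib Require Import Classical.

Lemma cross0 (R : realType) (v v' a b : point R) :
  a != b -> dot a v = dot b v -> dot a v' = dot b v' -> cross v v' = 0.
Proof.
move=> ab e e'.
have h1 : (b.1 - a.1) * cross v v' = v'.2 * (dot b v - dot a v) - v.2 * (dot b v' - dot a v').
  rewrite /cross /dot; ring.
have h2 : (b.2 - a.2) * cross v v' = - v'.1 * (dot b v - dot a v) + v.1 * (dot b v' - dot a v').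
  rewrite /cross /dot; ring.
rewrite e e' !subrr !mulr0 subrr addr0 in h1 h2.
apply/eqP; apply: contraNT ab => cn.
move/eqP: h1; rewrite mulf_eq0 (negbTE cn) orbF subr_eq0 => /eqP h1.
move/eqP: h2; rewrite mulf_eq0 (negbTE cn) orbF subr_eq0 => /eqP h2.
by clear e e'; case: a b h1 h2 => [a1 a2] [b1 b2] /= -> ->.
Qed.

Lemma scal (R : realType) (v v' : point R) : on_circle v -> cross v v' = 0 ->
  forall w, dot w v' = dot v' v * dot w v.
Proof. by move=> hv c w; rewrite (@ident R v v' w hv) c mul0r addr0. Qed.

Definition slope (R : realType) (v : point R) (p : point R * point R) :=
  (v.1 * (p.2.2 - p.1.2) - v.2 * (p.2.1 - p.1.1)) / (dot p.2 v - dot p.1 v).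

Lemma posdir (R : realType) (v v' c e : point R) : on_circle v -> dot c v < dot e v ->
  (dot c v' < dot e v') = (0 < dot v' v + cross v v' * slope v (c, e)).
Proof.
move=> hv lt.
have pp : 0 < dot e v - dot c v by rewrite subr_gt0.
have E : dot e v' - dot c v' = (dot e v - dot c v) * (dot v' v + cross v v' * slope v (c, e)).
  rewrite (@ident R v v' e hv) (@ident R v v' c hv) /slope /=.
  have nz : dot e v - dot c v != 0 by rewrite gt_eqF.
  rewrite /cross; field; exact: nz.
by rewrite -subr_gt0 E pmulr_rgt0.
Qed.

Lemma interp (R : realType) (A C s1 s2 s : R) :
  0 < A + C * s1 -> 0 < A + C * s2 -> s1 <= s -> s <= s2 -> 0 < A + C * s.
Proof.
move=> h1 h2 l1 l2; case: (leP 0 C) => hC.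
- have : C * s1 <= C * s by rewrite ler_wpM2l. lra.
- have : C * s2 <= C * s by rewrite ler_wnM2l // ltW. lra.
Qed.

Lemma G (R : realType) (v : point R) (S : seq (point R)) (x0 : point R) :
  on_circle v -> x0 \in S ->
  exists W, {subset W <= S} /\ x0 \in W /\ (size W <= 5)%N /\
    forall v', ordc v v' W -> ordc v v' S.
Proof.
move=> hv x0S.
case: (classic (exists c e, c \in S /\ e \in S /\ dot c v < dot e v))
   => [[c [e [cS [eS ce]]]] | nostrict].
- case: (classic (exists a b, a \in S /\ b \in S /\ a != b /\ dot a v = dot b v))
     => [[a [b [aS [bS [ab eab]]]]] | inj].
  + exists [:: x0; a; b; c; e]; split.
      have sub : all (fun z => z \in S) [:: x0; a; b; c; e] by rewrite /= x0S aS bS cS eS.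
      exact/allP.
    split; first exact: mem_head.
    split; first by [].
    move=> v' o.
    have ea := ord_eq o (_ : a \in _) (_ : b \in _) eab.
    rewrite !inE !eqxx !orbT in ea; have {ea} ea := ea isT isT.
    have lt := ord_lt o (_ : c \in _) (_ : e \in _) ce.
    rewrite !inE !eqxx !orbT in lt; have {lt} lt := lt isT isT.
    have sc := scal hv (cross0 ab eab ea).
    have kpos : 0 < dot v' v.
      rewrite !sc in lt; nra.
    by move=> x x' _ _; rewrite /hcmp !sc ler_pM2l.
  + have inj' : forall a b, a \in S -> b \in S -> dot a v = dot b v -> a = b.
      move=> a b aS bS eab; apply: NNPP => nab; apply: inj.
      by exists a, b; do 3 split => //; apply/eqP.
    pose P := [seq p <- [seq (x, y) | x <- S, y <- S] | dot p.1 v < dot p.2 v].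
    have memP : forall x y, x \in S -> y \in S -> dot x v < dot y v -> (x, y) \in P.
      move=> x y xS yS lt; rewrite mem_filter /= lt /=.
      exact: (allpairs_f pair xS yS).
    have memP' : forall p, p \in P -> dot p.1 v < dot p.2 v.
      by move=> p; rewrite mem_filter => /andP [].
    have memP'' : forall p, p \in P -> p.1 \in S /\ p.2 \in S.
      move=> p; rewrite mem_filter => /andP [_ /allpairsP [[x y] [/= xS yS ->]]] //.
    have Pn : P != [::] by apply/eqP => P0; have := memP _ _ cS eS ce; rewrite P0.
    have [p1 p1P hp1] := argmin (slope v) Pn.
    have [p2 p2P hp2] := argmin (fun p => - slope v p) Pn.
    have [s11 s12] := memP'' _ p1P.
    have [s21 s22] := memP'' _ p2P.
    exists [:: x0; p1.1; p1.2; p2.1; p2.2]; split.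
      have sub : all (fun z => z \in S) [:: x0; p1.1; p1.2; p2.1; p2.2]
        by rewrite /= x0S s11 s12 s21 s22.
      exact/allP.
    split; first exact: mem_head.
    split; first by [].
    move=> v' o.
    have l1 := ord_lt o (_ : p1.1 \in _) (_ : p1.2 \in _) (memP' _ p1P).
    rewrite !inE !eqxx !orbT in l1; have {l1} l1 := l1 isT isT.
    have l2 := ord_lt o (_ : p2.1 \in _) (_ : p2.2 \in _) (memP' _ p2P).
    rewrite !inE !eqxx !orbT in l2; have {l2} l2 := l2 isT isT.
    have key : forall x y, x \in S -> y \in S -> dot x v < dot y v -> dot x v' < dot y v'.
      move=> x y xS yS lt; rewrite (@posdir R v v' _ _ hv lt).
      have pP := memP _ _ xS yS lt.
      rewrite (@posdir R v v' _ _ hv (memP' _ p1P)) in l1.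
      rewrite (@posdir R v v' _ _ hv (memP' _ p2P)) in l2.
      apply: (interp l1 l2); first exact: (hp1 _ pP).
      by rewrite -lerN2; apply: (hp2 _ pP).
    move=> x x' xS x'S; rewrite /hcmp.
    case: (ltgtP (dot x' v) (dot x v)) => h.
    * by rewrite (ltW (key _ _ x'S xS h)).
    * by rewrite leNgt (key _ _ xS x'S h).
    * by rewrite (inj' _ _ x'S xS h) !lexx.
- have ns : forall c e, c \in S -> e \in S -> dot e v <= dot c v.
    move=> c e cS eS; rewrite leNgt; apply/negP => lt; apply: nostrict.
    by exists c, e.
  have eqf : forall c e, c \in S -> e \in S -> dot c v = dot e v.
    by move=> c e cS eS; apply/le_anti; rewrite !ns.
  case: (classic (exists a b, a \in S /\ b \in S /\ a != b)) => [[a [b [aS [bS ab]]]] | alleq].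
  + exists [:: x0; a; b]; split.
      have sub : all (fun z => z \in S) [:: x0; a; b] by rewrite /= x0S aS bS.
      exact/allP.
    split; first exact: mem_head.
    split; first by [].
    move=> v' o.
    have ea := ord_eq o (_ : a \in _) (_ : b \in _) (eqf _ _ aS bS).
    rewrite !inE !eqxx !orbT in ea; have {ea} ea := ea isT isT.
    have sc := scal hv (cross0 ab (eqf _ _ aS bS) ea).
    by move=> x x' xS x'S; rewrite /hcmp !sc (eqf _ _ xS x'S) !lexx.
  + exists [:: x0]; split.
      by move=> z; rewrite inE => /eqP ->.
    split; first exact: mem_head.
    split; first by [].
    move=> v' _ x x' xS x'S.
    have -> : x = x'.
      apply: NNPP => nxx; apply: alleq; exists x, x'; do 2 split => //; exact/eqP.
    by rewrite /hcmp !lexx.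
Qed.

Lemma dotC (R : realType) (a c : point R) : dot a c = dot c a.
Proof. by rewrite /dot mulrC [a.2 * _]mulrC. Qed.

Theorem proposition4p6 (R : realType) : lossless_compression_scheme R 5.
Proof.
move=> v b hv S hS q [hql hqc].
case: (eqVneq S [::]) => [->|Sn].
  by exists [::]; split; [|split].
have [x0 [x0S ext]] : exists x0, x0 \in S /\ forall x, x \in S ->
    if hlabel v b x0 then dot x0 v <= dot x v else dot x v <= dot x0 v.
  have [m mS hm] := argmin (fun x => dot x v) Sn.
  have [M MS hM] := argmin (fun x => - dot x v) Sn.
  case Lm: (hlabel v b m).
    by exists m; rewrite Lm; split=> // x xS; exact: hm.
  exists M; have -> : hlabel v b M = false by rewrite (hS M m) // Lm.
  by split=> // x xS; have := hM x xS; rewrite lerN2.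
have [W [sub [x0W [sz hG]]]] := G hv x0S.
exists W; split; first exact: sub.
split; first exact: sz.
have cons : forall v' b', consistent q W v' b' -> consistent q S v' b'.
  move=> v' b' [hc [hl hcm]].
  have o : ordc v v' W.
    move=> x x' xW x'W; have xS := sub x xW; have x'S := sub x' x'W.
    by rewrite hcm // hqc.
  have oS := hG v' o.
  split; first exact: hc.
  split.
  - move=> x xS.
    rewrite hql // (hS x x0 xS x0S).
    have lx0 : hlabel v' b' x0 = hlabel v b x0 by rewrite hl // hql.
    move: (ext x xS) lx0 (oS x x0 xS x0S) (oS x0 x x0S xS).
    rewrite /hcmp /hlabel /hval !(dotC v').
    case: (0 <= dot v x0 + b) => ex lx0 h1 h2.
    + rewrite ex in h1; lra.
    + rewrite ex in h2; apply/negbTE; move/negbT: lx0; rewrite -!ltNge => lx0.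
      lra.
  - by move=> x x' xS x'S; rewrite (oS x x' xS x'S) hqc.
have cons' : forall v' b', consistent q S v' b' -> consistent q W v' b'.
  move=> v' b' [hc [hl hcm]]; split; first exact: hc.
  by split => [x xW|x x' xW x'W]; [apply: hl; apply: sub|apply: hcm; apply: sub].
move=> y; split => H v1 b1 v2 b2 c1 c2; apply: H.
- exact: cons.
- exact: cons.
- exact: cons'.
- exact: cons'.
Qed.
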